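(* Let $\mathbb{H}=\{z\in\mathbb{C}:\operatorname{Im}z>0\}$ and $p\ge1$. For all $z_1,z_2\in\mathbb{H}$, \[ b_{\mathbb{H},p}(z_1,z_2)\le\frac{|z_1-z_2|}{\max\{\operatorname{Im}(z_1),\operatorname{Im}(z_2)\}}. \]
   Context: For $z_1,z_2\in\mathbb{H}$ and $p\ge1$, $b_{\mathbb{H},p}(z_1,z_2)=\sup_{t\in\mathbb{R}}\frac{|z_1-z_2|}{\sqrt[p]{|z_1-t|^p+|t-z_2|^p}}$. *)

(* Defs.v *)
From Stdlib Require Import Reals.
From Coquelicot Require Import Coquelicot.
Open Scope R_scope.

Definition in_H (z : C) : Prop := 0 < Im z.

(* The quantity |z1-z2| / (|z1-t|^p + |t-z2|^p)^(1/p) for real t (t viewed in C).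
   For z1,z2 in H the denominator base is > 0, so Rpower is the usual p-th root. *)
Definition b_quot (p : R) (z1 z2 : C) (t : R) : R :=
  Cmod (z1 - z2)%C /
  Rpower (Rpower (Cmod (z1 - RtoC t)%C) p + Rpower (Cmod (RtoC t - z2)%C) p) (/ p).

Definition b_H (p : R) (z1 z2 : C) : Rbar :=
  Lub_Rbar (fun y => exists t : R, y = b_quot p z1 z2 t).

(* Main.v *)
Require Import Defs.
From Stdlib Require Import Reals Lra Psatz.
From Coquelicot Require Import Coquelicot.
Open Scope R_scope.

Lemma Im_le_Cmod (z : C) : Im z <= Cmod z.
Proof.
  pose proof (Cmod2_alt z). pose proof (Cmod_ge_0 z).
  destruct (Rle_lt_dec (Im z) (Cmod z)) as [h|h]; auto.
  exfalso. simpl in H. nra.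
Qed.

Lemma Im_le_Cmod' (z : C) : - Im z <= Cmod z.
Proof.
  pose proof (Cmod2_alt z). pose proof (Cmod_ge_0 z).
  destruct (Rle_lt_dec (- Im z) (Cmod z)) as [h|h]; auto.
  exfalso. simpl in H. nra.
Qed.

Lemma Rpower_pos (x y : R) : 0 < Rpower x y.
Proof. unfold Rpower. apply exp_pos. Qed.

Lemma key (p : R) (z1 z2 : C) (t : R) :
  1 <= p -> in_H z1 -> in_H z2 ->
  Rmax (Im z1) (Im z2) <=
  Rpower (Rpower (Cmod (z1 - RtoC t)%C) p + Rpower (Cmod (RtoC t - z2)%C) p) (/ p).
Proof.
  intros hp h1 h2. unfold in_H in *.
  assert (A : Im z1 <= Cmod (z1 - RtoC t)%C).
  { eapply Rle_trans; [|apply Im_le_Cmod]. unfold Cminus, Cplus, Copp, RtoC; unfold Im in *; simpl. lra. }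
  assert (B : Im z2 <= Cmod (RtoC t - z2)%C).
  { eapply Rle_trans; [|apply Im_le_Cmod']. unfold Cminus, Cplus, Copp, RtoC; unfold Im in *; simpl. lra. }
  pose proof (Rpower_pos (Cmod (z1 - RtoC t)%C) p).
  pose proof (Rpower_pos (Cmod (RtoC t - z2)%C) p).
  assert (Hinv: 0 <= / p). { apply Rlt_le, Rinv_0_lt_compat; lra. }
  apply Rmax_lub.
  - rewrite <- (Rpower_1 (Im z1)) at 1 by lra.
    replace 1 with (p * / p) by (field; lra).
    rewrite <- Rpower_mult. apply Rle_Rpower_l; auto. split; [apply Rpower_pos|].
    apply Rle_trans with (Rpower (Cmod (z1 - RtoC t)%C) p); [|lra].
    apply Rle_Rpower_l; lra.
  - rewrite <- (Rpower_1 (Im z2)) at 1 by lra.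
    replace 1 with (p * / p) by (field; lra).
    rewrite <- Rpower_mult. apply Rle_Rpower_l; auto. split; [apply Rpower_pos|].
    apply Rle_trans with (Rpower (Cmod (RtoC t - z2)%C) p); [|lra].
    apply Rle_Rpower_l; lra.
Qed.

Theorem proposition3p27 (p : R) (z1 z2 : C) :
  1 <= p -> in_H z1 -> in_H z2 ->
  Rbar_le (b_H p z1 z2) (Finite (Cmod (z1 - z2)%C / Rmax (Im z1) (Im z2))).
Proof.
  intros hp h1 h2. unfold b_H.
  destruct (Lub_Rbar_correct (fun y => exists t : R, y = b_quot p z1 z2 t)) as [_ H].
  apply H. intros y [t ->]. simpl. unfold b_quot.
  pose proof (key p z1 z2 t hp h1 h2).
  assert (0 < Rmax (Im z1) (Im z2)). { unfold in_H in *. eapply Rlt_le_trans; [apply h1|apply Rmax_l]. }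
  unfold Rdiv. apply Rmult_le_compat_l; [apply Cmod_ge_0|].
  apply Rinv_le_contravar; auto.
Qed.
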